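(* For the $m\times m$ matrix multiplication tensor $\mathcal M_m$ one has $\underline R(\mathcal M_m)\ge\frac32m^2-\frac12$ if $m$ is odd, and $\underline R(\mathcal M_m)\ge\frac32m^2-2$ if $m$ is even.
   Context: $\mathcal M_m=\sum_{i,j,l=1}^m|ij\rangle\otimes|jl\rangle\otimes|li\rangle\in\bigotimes^3\mathbb C^{m\times m}$, where $|ij\rangle$ denotes the standard basis of $\mathbb C^{m\times m}$. The border rank $\underline R(w)$ of a tensor $w$ is the least $r$ such that $w$ is a limit of tensors each expressible as a sum of at most $r$ tensors of the form $u\otimes v\otimes x$. *)

(* Defs.v *)
From Stdlib Require Import Reals Arith.
Open Scope R_scope.

Definition C : Type := (R * R)%type.
Definition C0 : C := (0, 0).
Definition C1 : C := (1, 0).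
Definition Cadd (z w : C) : C := (fst z + fst w, snd z + snd w).
Definition Cmul (z w : C) : C :=
  (fst z * fst w - snd z * snd w, fst z * snd w + snd z * fst w).

(** Convergence of a sequence of complex numbers (real and imaginary parts
    converge; equivalent to convergence in modulus). *)
Definition Ccv (u : nat -> C) (l : C) : Prop :=
  Un_cv (fun n => fst (u n)) (fst l) /\ Un_cv (fun n => snd (u n)) (snd l).

Fixpoint Csum (n : nat) (f : nat -> C) : C :=
  match n with
  | O => C0
  | S k => Cadd (Csum k f) (f k)
  end.

(** A tensor in C^N (x) C^N (x) C^N, given by its coordinates
    T a b c for a, b, c < N (values outside this range are irrelevant). *)
Definition tensor := nat -> nat -> nat -> C.

(** [T] is a sum of at most [r] tensors of the form u (x) v (x) x
    (rank <= r); zero summands allowed, so "exactly r" summands suffices. *)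
Definition rank_le (N : nat) (T : tensor) (r : nat) : Prop :=
  exists (u v x : nat -> nat -> C),
    forall a b c, (a < N)%nat -> (b < N)%nat -> (c < N)%nat ->
      T a b c = Csum r (fun k => Cmul (Cmul (u k a) (v k b)) (x k c)).

(** Border rank <= r: w is a limit of tensors of rank <= r
    (limit in the Euclidean topology of the finite-dimensional space,
    i.e. coordinatewise; sequential closure = closure in C^(N^3)). *)
Definition border_rank_le (N : nat) (w : tensor) (r : nat) : Prop :=
  exists T : nat -> tensor,
    (forall n, rank_le N (T n) r) /\
    (forall a b c, (a < N)%nat -> (b < N)%nat -> (c < N)%nat ->
       Ccv (fun n => T n a b c) (w a b c)).

(** Matrix multiplication tensor M_m in (C^{m x m})^{(x)3}; the basis vector
    |ij> of C^{m x m} (0 <= i,j < m) has index i*m + j, so N = m*m.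
    M_m = sum_{i,j,l} |ij> (x) |jl> (x) |li>. *)
Definition matmul_tensor (m : nat) : tensor :=
  fun a b c =>
    if (Nat.eqb (a / m) (c mod m) && Nat.eqb (a mod m) (b / m)
        && Nat.eqb (b mod m) (c / m))%bool
    then C1 else C0.

(* Main.v *)
Require Import Defs.
From Stdlib Require Import Reals Arith.
From mathcomp Require all_boot all_algebra ring zify complex Rstruct fingroup perm.

Module Work.
Import all_boot all_algebra ring zify complex Rstruct fingroup perm.
Local Set Implicit Arguments. Local Unset Strict Implicit. Local Unset Printing Implicit Defensive.
Import GRing.Theory Num.Theory.
Local Open Scope ring_scope.
Local Notation CC := (complex R).
Local Notation Rep := (@complex.Re R).
Local Notation Imp := (@complex.Im R).

Section Strassen.
Variable K : fieldType.
Lemma zhelp (U : zmodType) (a b c : U) : a - c - (a - b) = b - c.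
Proof. by rewrite opprB addrC addrA subrK. Qed.

Lemma strassen n r (V : 'M[K]_(n,r)) (W : 'M[K]_(r,n)) (d1 d2 d3 : 'rV[K]_r) :
  (forall k, d2 0 k != 0) ->
  (V *m diag_mx d2 *m W) \in unitmx ->
  (\rank ((V *m diag_mx d1 *m W) *m \adj (V *m diag_mx d2 *m W) *m (V *m diag_mx d3 *m W)
        - (V *m diag_mx d3 *m W) *m \adj (V *m diag_mx d2 *m W) *m (V *m diag_mx d1 *m W))%R
     <= 2 * (r - n))%N.
Proof.
move=> d2nz.
set D1 := diag_mx d1; set D2 := diag_mx d2; set D3 := diag_mx d3.
set T2 := V *m D2 *m W => uT2.
set iT := invmx T2.
have adjE : \adj T2 = \det T2 *: iT.
  rewrite /iT /invmx uT2 scalerA mulfV ?scale1r //.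
  by move: uT2; rewrite unitmxE unitfE.
set Z := W *m iT *m V.
set D2i := diag_mx (\row_k (d2 0 k)^-1).
set Y := D2i - Z.
set E := Z *m D2.
have D2D2i : D2 *m D2i = 1%:M.
  rewrite /D2 /D2i mulmx_diag -diag_const_mx; congr diag_mx.
  by apply/rowP=> k; rewrite !mxE mulfV.
have ZD2Z : Z *m D2 *m Z = Z.
  by rewrite /Z !mulmxA -(mulmxA (W *m iT) V D2) -(mulmxA (W *m iT) (V *m D2) W) -/T2 -(mulmxA W iT T2) mulVmx // mulmx1.
have EE : E *m E = E by rewrite /E mulmxA ZD2Z.
have rE : (n <= \rank E)%N.
  have hT2 : T2 = V *m D2 *m E *m W.
    by rewrite /E /Z !mulmxA -/T2 mulmxV // mul1mx.
  rewrite -{1}(mxrank_unit uT2) hT2.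
  move: (mxrankM_maxl (V *m D2 *m E) W) => h; apply: leq_trans h _.
  exact: mxrankM_maxr.
have rIE : (\rank (1%:M - E)%R + \rank E <= r)%N.
  have := mxrank_mul_min (1%:M - E) E.
  rewrite mulmxBl mul1mx EE subrr mxrank0 leqn0 subn_eq0 //.
have rY : (\rank Y <= r - n)%N.
  have -> : Y = ((1%:M - E) *m D2i)%R.
    by rewrite mulmxBl mul1mx /E -mulmxA D2D2i mulmx1.
  apply: leq_trans (mxrankM_maxl _ _) _.
  rewrite leq_subRL; last by apply: leq_trans rE (rank_leq_row _).
  by rewrite addnC; apply: leq_trans rIE; rewrite leq_add2l.
have key : forall A B : 'M[K]_r, (V *m A *m W) *m iT *m (V *m B *m W) = V *m (A *m Z *m B) *m W.
  by move=> A B; rewrite /Z !mulmxA.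
rewrite adjE -!scalemxAr -!scalemxAl -scalerBr.
apply: leq_trans (mxrank_scale _ _) _.
rewrite !key -mulmxBl -mulmxBr.
apply: leq_trans (mxrankM_maxl _ _) _.
apply: leq_trans (mxrankM_maxr _ _) _.
have -> : D1 *m Z *m D3 - D3 *m Z *m D1 = D3 *m Y *m D1 - D1 *m Y *m D3.
  rewrite /Y !mulmxBr !mulmxBl.
  have -> : D1 *m D2i *m D3 = D3 *m D2i *m D1.
    rewrite /D1 /D3 /D2i !mulmx_diag; congr diag_mx; apply/rowP=> k; rewrite !mxE; ring.
  by rewrite zhelp.
apply: leq_trans (mxrank_add _ _) _.
rewrite mxrank_opp mul2n -addnn leq_add //.
  apply: leq_trans (mxrankM_maxl _ _) _; apply: leq_trans (mxrankM_maxr _ _) _; exact: rY.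
apply: leq_trans (mxrankM_maxl _ _) _; apply: leq_trans (mxrankM_maxr _ _) _; exact: rY.
Qed.
End Strassen.

Section MM.
Variable K : fieldType.
Variable m : nat.
Local Notation N := (m * m)%N.

Lemma sum_split (f : nat -> K) :
  \sum_(c < N) f c = \sum_(i < m) \sum_(j < m) f (i * m + j)%N.
Proof.
rewrite -(big_mkord xpredT f).
have H : forall a, \sum_(0 <= c < a * m) f c = \sum_(i < a) \sum_(j < m) f (i * m + j)%N.
  elim=> [|a IH]; first by rewrite mul0n big_geq // big_ord0.
  rewrite big_ord_recr /= -IH mulSn addnC (@big_cat_nat _ _ _ (a * m)%N) ?leq_addr //=.
  congr (_ + _); rewrite -{1}(add0n (a * m)%N) big_addn addKn (big_mkord xpredT).
  by apply: eq_bigr => j _; rewrite addnC.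
exact: H.
Qed.

Lemma sum_pick (t : nat) (f : nat -> K) :
  \sum_(k < m) (if k == t :> nat then f k else 0) = if (t < m)%N then f t else 0.
Proof.
case: ifP => ht.
  rewrite (bigD1 (Ordinal ht)) //= eqxx big1 ?addr0 // => k hk.
  case: eqP => // ek; move: hk; rewrite -val_eqE /= ek eqxx //.
rewrite big1 // => k _; case: eqP => // ek; move: (ltn_ord k); rewrite ek ht //.
Qed.

Lemma sum_pickO (F : 'I_m -> K) (t : nat) (ht : (t < m)%N) :
  \sum_(k < m) (if k == t :> nat then F k else 0) = F (Ordinal ht).
Proof.
rewrite (bigD1 (Ordinal ht)) //= eqxx big1 ?addr0 // => k hk.
case: eqP => // ek; move: hk; rewrite -val_eqE /= ek eqxx //.
Qed.

Definition Tm (A : nat -> nat -> K) : 'M[K]_N :=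
  \matrix_(b, c) if (b %% m == c %/ m)%N then A (c %% m)%N (b %/ m)%N else 0.

Definition Id (i j : nat) : K := if i == j then 1 else 0.
Definition mulf (C A : nat -> nat -> K) i j := \sum_(k < m) C i k * A k j.

Lemma ltdiv (b : 'I_N) : (b %/ m < m)%N.
Proof. by rewrite ltn_divLR ?ltn_ord //; case: m b => [[]|]. Qed.
Lemma ltmod (b : 'I_N) : (b %% m < m)%N.
Proof. by rewrite ltn_mod; case: m b => [[]|]. Qed.

Lemma divmodE (i j : nat) : (j < m)%N -> ((i * m + j) %/ m = i /\ (i * m + j) %% m = j)%N.
Proof.
move=> hj; have m0 : (0 < m)%N by apply: leq_ltn_trans hj.
by rewrite divnMDl // modnMDl divn_small // modn_small // addn0.
Qed.

Lemma ltij (i j : 'I_m) : (i * m + j < N)%N.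
Proof.
apply: (@leq_trans (i * m + m)%N); first by rewrite ltn_add2l.
by rewrite addnC -mulSn leq_mul2r ltn_ord orbT.
Qed.

Lemma sum_splitO (F : 'I_N -> K) :
  \sum_(c < N) F c = \sum_(i < m) \sum_(j < m) oapp F 0 (insub (i * m + j)%N).
Proof.
rewrite -(sum_split (fun n => oapp F 0 (insub n))); apply: eq_bigr => c _; by rewrite valK.
Qed.

Lemma insub_ij (F : 'I_N -> K) (i j : 'I_m) :
  oapp F 0 (insub (i * m + j)%N) = F (Ordinal (ltij i j)).
Proof.
case: insubP => [u _ e | ]; last by rewrite ltij.
by congr F; apply: val_inj; rewrite /= e.
Qed.

Lemma TmTmId (A : nat -> nat -> K) :
  Tm A *m Tm Id = \matrix_(b, d) (A (d %/ m)%N (b %/ m)%N * Id (d %% m)%N (b %% m)%N).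
Proof.
apply/matrixP=> b d; rewrite !mxE sum_splitO.
transitivity (\sum_(i < m) (if i == (b %% m)%N :> nat then
    \sum_(j < m) (if j == (d %/ m)%N :> nat then A j (b %/ m)%N * Id (d %% m)%N i else 0) else 0)).
  apply: eq_bigr => i _; case: eqP => hi.
    apply: eq_bigr => j _; have [e1 e2] := divmodE i (ltn_ord j).
    rewrite insub_ij /Tm !mxE /= e1 e2 -hi eqxx.
    by case: eqP => hj; [rewrite hj | rewrite mulr0].
  apply: big1 => j _; have [e1 e2] := divmodE i (ltn_ord j).
  rewrite insub_ij /Tm !mxE /= e1 e2.
  by case: eqP => h; [move: hi; rewrite h | rewrite mul0r].
by rewrite (sum_pickO _ (ltmod b)) (sum_pickO _ (ltdiv d)).
Qed.
Lemma TmTmIdTm (A C : nat -> nat -> K) :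
  Tm A *m Tm Id *m Tm C = Tm (mulf C A).
Proof.
rewrite TmTmId; apply/matrixP=> b e; rewrite !mxE sum_splitO.
transitivity (\sum_(i < m) \sum_(j < m) (if j == (e %/ m)%N :> nat then
   (if (b %% m == e %/ m)%N then A i (b %/ m)%N * C (e %% m)%N i else 0) else 0)).
  apply: eq_bigr => i _; apply: eq_bigr => j _; have [e1 e2] := divmodE i (ltn_ord j).
  rewrite insub_ij /Tm !mxE /= e1 e2 /Id.
  case: (@eqP _ (nat_of_ord j) (e %/ m)%N) => hj; last by rewrite mulr0.
  by rewrite hj eq_sym; case: eqP => _; [rewrite mulr1 | rewrite mulr0 mul0r].
under eq_bigr => i _ do rewrite (sum_pickO _ (ltdiv e)) /=.
rewrite /mulf; case: eqP => _; last by rewrite big1.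
by apply: eq_bigr => i _; rewrite mulrC.
Qed.
Definition Mk (a b c : nat) : K :=
  if ((a %/ m == c %% m) && (a %% m == b %/ m) && (b %% m == c %/ m))%N then 1 else 0.

Definition sl (T : nat -> nat -> nat -> K) (al : nat -> K) : 'M[K]_N :=
  \matrix_(b, c) \sum_(a < N) al a * T a b c.

Lemma slM (A : nat -> nat -> K) : sl Mk (fun a => A (a %/ m)%N (a %% m)%N) = Tm A.
Proof.
apply/matrixP=> b c; rewrite !mxE sum_splitO.
transitivity (\sum_(i < m) (if i == (c %% m)%N :> nat then \sum_(j < m) (if j == (b %/ m)%N :> nat then
   (if (b %% m == c %/ m)%N then A i j else 0) else 0) else 0)).
  apply: eq_bigr => i _; case: (@eqP _ (nat_of_ord i) (c %% m)%N) => hi; last first.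
    apply: big1 => j _; have [e1 e2] := divmodE i (ltn_ord j).
    by rewrite insub_ij /Mk /= e1 e2; case: eqP => h; [case: hi; rewrite h | rewrite mulr0].
  apply: eq_bigr => j _; have [e1 e2] := divmodE i (ltn_ord j).
  rewrite insub_ij /Mk /= e1 e2 hi eqxx /=.
  case: (@eqP _ (nat_of_ord j) (b %/ m)%N) => hj; last by rewrite /= mulr0.
  by rewrite /=; case: ifP => _; [rewrite mulr1 | rewrite mulr0].
rewrite (sum_pickO _ (ltmod c)) (sum_pickO _ (ltdiv b)) /=.
by [].
Qed.
Lemma Tm_ext (X Y : nat -> nat -> K) :
  (forall i j, (i < m)%N -> (j < m)%N -> X i j = Y i j) -> Tm X = Tm Y.
Proof.
move=> h; apply/matrixP=> b c; rewrite !mxE; case: ifP => // _.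
by rewrite h // ?ltmod ?ltdiv.
Qed.

Lemma TmB (X Y : nat -> nat -> K) : Tm X - Tm Y = Tm (fun i j => X i j - Y i j).
Proof.
apply/matrixP=> b c; rewrite !mxE; case: ifP => // _; by rewrite subrr.
Qed.

Lemma TmId2 : Tm Id *m Tm Id = 1%:M.
Proof.
rewrite TmTmId; apply/matrixP=> b d; rewrite !mxE /Id.
case: (b =P d) => [->|hbd]; first by rewrite !eqxx mulr1.
case: eqP => h1; case: eqP => h2; rewrite ?mulr0 ?mul0r //.
case: hbd; apply: val_inj; by rewrite /= (divn_eq b m) (divn_eq d m) h1 h2.
Qed.

Lemma TmId_inv : invmx (Tm Id) = Tm Id.
Proof.
have u : Tm Id \in unitmx by case: (mulmx1_unit TmId2).
by rewrite -[LHS]mulmx1 -TmId2 mulmxA mulVmx // mul1mx.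
Qed.

Lemma TmId_unit : Tm Id \in unitmx.
Proof. by case: (mulmx1_unit TmId2). Qed.

Lemma adj_TmId : \adj (Tm Id) = \det (Tm Id) *: Tm Id.
Proof.
have u := TmId_unit.
have d0 : \det (Tm Id) != 0 by move: u; rewrite unitmxE unitfE.
have e : invmx (Tm Id) = (\det (Tm Id))^-1 *: \adj (Tm Id) by rewrite /invmx u.
rewrite TmId_inv in e; by rewrite [X in _ *: X]e scalerA mulfV // scale1r.
Qed.

Lemma Tm_unit (X Y : nat -> nat -> K) :
  (forall i j, (i < m)%N -> (j < m)%N -> mulf Y X i j = Id i j) -> Tm X \in unitmx.
Proof.
move=> h.
have e : Tm X *m (Tm Id *m Tm Y *m Tm Id) = 1%:M.
  by rewrite !mulmxA TmTmIdTm (Tm_ext h) TmId2.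
by case: (mulmx1_unit e).
Qed.

Lemma G_M (A1 A3 : nat -> nat -> K) :
  Tm A1 *m \adj (Tm Id) *m Tm A3 - Tm A3 *m \adj (Tm Id) *m Tm A1 =
  \det (Tm Id) *: Tm (fun i j => mulf A3 A1 i j - mulf A1 A3 i j).
Proof.
by rewrite adj_TmId -!scalemxAr -!scalemxAl -scalerBr !TmTmIdTm TmB.
Qed.
Definition A1 (i j : nat) : K := if j == i.+1 then (i.+1)%:R else 0.
Definition A3 (i j : nat) : K := if i == j.+1 then 1 else 0.
Definition kd (i : nat) : K :=
  (if (0 < i)%N then i%:R else 0) - (if (i.+1 < m)%N then (i.+1)%:R else 0).
Definition Kinv (i j : nat) : K := if i == j then (kd i)^-1 else 0.

Lemma sum_pickN (t : nat) (f : nat -> K) :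
  \sum_(k < m) (if k == t :> nat then f k else 0) = if (t < m)%N then f t else 0.
Proof.
case: ifP => ht; first by rewrite (sum_pickO (fun k : 'I_m => f k) ht).
rewrite big1 // => k _; case: eqP => // ek; move: (ltn_ord k); rewrite ek ht //.
Qed.

Lemma K0E i j : (i < m)%N -> (j < m)%N ->
  mulf A3 A1 i j - mulf A1 A3 i j = if i == j then kd i else 0.
Proof.
move=> hi hj; rewrite /mulf /A1 /A3 /kd.
have e1 : \sum_(k < m) (if i == k.+1 then 1 else 0) * (if j == k.+1 then (k.+1)%:R else 0)
    = if (0 < i)%N && (i == j) then i%:R else 0 :> K.
  case: i hi => [|i] hi.
    by rewrite big1 // => k _; rewrite mul0r.
  transitivity (\sum_(k < m) (if k == i :> nat then (if j == k.+1 then (k.+1)%:R else 0) else 0 : K)).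
    apply: eq_bigr => k _; rewrite eqSS eq_sym; case: eqP => [->|_]; last by rewrite mul0r.
    by rewrite mul1r.
  rewrite (sum_pickN i (fun k => if j == k.+1 then (k.+1)%:R else 0)) (ltn_trans (ltnSn i) hi) /=.
  by case: eqP => [->|h]; [rewrite eqxx | case: eqP => // h'; case: h].
have e2 : \sum_(k < m) (if k == i.+1 :> nat then (i.+1)%:R else 0) * (if k == j.+1 :> nat then 1 else 0)
    = if (i.+1 < m)%N && (i == j) then (i.+1)%:R else 0 :> K.
  transitivity (\sum_(k < m) (if k == i.+1 :> nat then (if k == j.+1 :> nat then (i.+1)%:R else 0) else 0 : K)).
    apply: eq_bigr => k _; case: eqP => [->|_]; last by rewrite mul0r.
    by case: eqP => _; rewrite ?mulr1 ?mulr0.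
  by rewrite (sum_pickN i.+1 (fun k => if k == j.+1 then (i.+1)%:R else 0)) eqSS; case: ifP; rewrite ?andbF.
by rewrite e1 e2; case: (i =P j) => _; rewrite ?andbT ?andbF ?subr0.
Qed.

Hypothesis char0 : forall k, (k.+1)%:R != 0 :> K.
Hypothesis m2 : (1 < m)%N.

Lemma kd_nz i : (i < m)%N -> kd i != 0.
Proof.
move=> hi; rewrite /kd.
case: i hi => [|i] hi /=.
  by rewrite m2 sub0r oppr_eq0 oner_eq0.
case: ifP => h.
  by rewrite [(i.+2)%:R]mulrSr opprD addrA subrr sub0r oppr_eq0 oner_eq0.
by rewrite subr0 char0.
Qed.

Lemma Mk_G_nz :
  \det (sl Mk (fun a => A1 (a %/ m)%N (a %% m)%N) *m \adj (sl Mk (fun a => Id (a %/ m)%N (a %% m)%N))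
         *m sl Mk (fun a => A3 (a %/ m)%N (a %% m)%N)
       - sl Mk (fun a => A3 (a %/ m)%N (a %% m)%N) *m \adj (sl Mk (fun a => Id (a %/ m)%N (a %% m)%N))
         *m sl Mk (fun a => A1 (a %/ m)%N (a %% m)%N)) != 0.
Proof.
rewrite !slM G_M detZ mulf_neq0 //.
  by rewrite expf_neq0 //; move: TmId_unit; rewrite unitmxE unitfE.
have u : Tm (fun i j => mulf A3 A1 i j - mulf A1 A3 i j) \in unitmx.
  apply: (@Tm_unit _ Kinv) => i j hi hj.
  rewrite {1}/mulf /Kinv.
  under eq_bigr => k _ do rewrite /= (K0E (ltn_ord k) hj).
  transitivity (\sum_(k < m) (if k == i :> nat then (kd i)^-1 * (if k == j :> nat then kd k else 0) else 0)).
    apply: eq_bigr => k _; rewrite eq_sym; case: eqP => _; by rewrite ?mul0r.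
  rewrite (sum_pickN i (fun k => (kd i)^-1 * (if k == j then kd k else 0))) hi /Id.
  by case: (i =P j) => [->|_]; [rewrite mulVf // kd_nz | rewrite mulr0].
by move: u; rewrite unitmxE unitfE.
Qed.
Definition Tdec r (u v x : nat -> nat -> K) (a b c : nat) : K :=
  \sum_(k < r) u k a * v k b * x k c.

Definition Vm r (v : nat -> nat -> K) : 'M[K]_(N, r) := \matrix_(b, k) v k b.
Definition Wm r (x : nat -> nat -> K) : 'M[K]_(r, N) := \matrix_(k, c) x k c.
Definition dv r (u : nat -> nat -> K) (al : nat -> K) : 'rV[K]_r :=
  \row_k \sum_(a < N) al a * u k a.

Lemma sl_dec r u v x al :
  sl (Tdec r u v x) al = Vm r v *m diag_mx (dv r u al) *m Wm r x.
Proof.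
apply/matrixP=> b c; rewrite mul_mx_diag !mxE.
under eq_bigr => a _ do rewrite /Tdec mulr_sumr.
rewrite exchange_big /=; apply: eq_bigr => k _.
rewrite !mxE mulr_sumr mulr_suml; apply: eq_bigr => a _; ring.
Qed.

Definition al1 a := A1 (a %/ m)%N (a %% m)%N.
Definition al2 a := Id (a %/ m)%N (a %% m)%N.
Definition al3 a := A3 (a %/ m)%N (a %% m)%N.

Definition Phi (T : nat -> nat -> nat -> K) : K :=
  \det (sl T al1 *m \adj (sl T al2) *m sl T al3 - sl T al3 *m \adj (sl T al2) *m sl T al1).
Definition Psi (T : nat -> nat -> nat -> K) : K := \det (sl T al2).

Lemma dec_zero r u v x :
  (forall k, dv r u al2 0 k != 0) -> Psi (Tdec r u v x) != 0 -> (2 * r < 3 * N)%N ->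
  Phi (Tdec r u v x) = 0.
Proof.
move=> hd hP hr; rewrite /Phi !sl_dec.
move: hP; rewrite /Psi sl_dec => hP.
have u2 : Vm r v *m diag_mx (dv r u al2) *m Wm r x \in unitmx by rewrite unitmxE unitfE.
have := strassen (dv r u al1) (dv r u al3) hd u2.
set G := (_ - _)%R => hG.
apply/eqP; apply: contraT => hG0.
have uG : G \in unitmx by rewrite unitmxE unitfE.
move: hG; rewrite (mxrank_unit uG); lia.
Qed.
End MM.



Definition ccv (u : nat -> CC) (l : CC) : Prop :=
  Un_cv (fun n => Rep (u n)) (Rep l) /\ Un_cv (fun n => Imp (u n)) (Imp l).

Lemma Un_cv_ext (u v : nat -> R) l : (forall n, u n = v n) -> Un_cv u l -> Un_cv v l.
Proof. move=> e h eps he; case: (h eps he) => n0 hn; exists n0 => n hn'; rewrite -e; exact: hn. Qed.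

Lemma Un_cv_const (c : R) : Un_cv (fun _ => c) c.
Proof.
move=> eps he; exists 0%N => n _; rewrite /R_dist Rminus_diag_eq // Rabs_R0 //.
Qed.

Lemma ccv_ext u v l : (forall n, u n = v n) -> ccv u l -> ccv v l.
Proof. by move=> e [h1 h2]; split; [apply: Un_cv_ext h1 | apply: Un_cv_ext h2] => n; rewrite e. Qed.

Lemma ccv_const c : ccv (fun _ => c) c.
Proof. split; exact: Un_cv_const. Qed.

Lemma ccv_add u v l1 l2 : ccv u l1 -> ccv v l2 -> ccv (fun n => u n + v n) (l1 + l2).
Proof.
case: l1 l2 => a1 b1 [a2 b2] [h1 h2] [h3 h4]; split.
  by apply: Un_cv_ext (CV_plus _ _ _ _ h1 h3) => n; case: (u n) => ??; case: (v n).
by apply: Un_cv_ext (CV_plus _ _ _ _ h2 h4) => n; case: (u n) => ??; case: (v n).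
Qed.

Lemma ccv_mul u v l1 l2 : ccv u l1 -> ccv v l2 -> ccv (fun n => u n * v n) (l1 * l2).
Proof.
case: l1 l2 => a1 b1 [a2 b2] [h1 h2] [h3 h4]; split.
  have := CV_minus _ _ _ _ (CV_mult _ _ _ _ h1 h3) (CV_mult _ _ _ _ h2 h4).
  by move=> H; apply: Un_cv_ext H => n; case: (u n) => ??; case: (v n).
have := CV_plus _ _ _ _ (CV_mult _ _ _ _ h1 h4) (CV_mult _ _ _ _ h2 h3).
by move=> H; apply: Un_cv_ext H => n; case: (u n) => ??; case: (v n).
Qed.

Lemma ccv_opp u l : ccv u l -> ccv (fun n => - u n) (- l).
Proof.
case: l => a b [h1 h2]; split.
  have H := CV_opp _ _ h1; rewrite /opp_seq in H.
  by apply: Un_cv_ext H => n; case: (u n).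
have H := CV_opp _ _ h2; rewrite /opp_seq in H.
by apply: Un_cv_ext H => n; case: (u n).
Qed.

Lemma ccv_sum (I : Type) (s : seq I) (P : pred I) (G : nat -> I -> CC) (L : I -> CC) :
  (forall i, ccv (fun n => G n i) (L i)) ->
  ccv (fun n => \sum_(i <- s | P i) G n i) (\sum_(i <- s | P i) L i).
Proof.
move=> h; elim: s => [|i s IH].
  by rewrite big_nil; apply: ccv_ext (ccv_const 0) => n; rewrite big_nil.
rewrite big_cons; case: ifP => hP.
  by apply: ccv_ext (ccv_add (h i) IH) => n; rewrite big_cons hP.
by apply: ccv_ext IH => n; rewrite big_cons hP.
Qed.

Lemma ccv_prod (I : Type) (s : seq I) (P : pred I) (G : nat -> I -> CC) (L : I -> CC) :
  (forall i, ccv (fun n => G n i) (L i)) ->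
  ccv (fun n => \prod_(i <- s | P i) G n i) (\prod_(i <- s | P i) L i).
Proof.
move=> h; elim: s => [|i s IH].
  by rewrite big_nil; apply: ccv_ext (ccv_const 1) => n; rewrite big_nil.
rewrite big_cons; case: ifP => hP.
  by apply: ccv_ext (ccv_mul (h i) IH) => n; rewrite big_cons hP.
by apply: ccv_ext IH => n; rewrite big_cons hP.
Qed.

Lemma ccv_unique u l1 l2 : ccv u l1 -> ccv u l2 -> l1 = l2.
Proof.
case: l1 l2 => a1 b1 [a2 b2] [h1 h2] [h3 h4].
have e1 := UL_sequence _ _ _ h1 h3; have e2 := UL_sequence _ _ _ h2 h4.
by simpl in e1, e2; rewrite e1 e2.
Qed.

Lemma ccv_ev (u v : nat -> CC) l : (exists n0 : nat, forall n : nat, (n0 <= n)%N -> u n = v n) -> ccv u l -> ccv v l.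
Proof.
case=> n0 e [h1 h2]; split=> eps he.
  case: (h1 eps he) => n1 hn; exists (maxn n0 n1) => n hn'.
  have /leP := hn'; rewrite geq_max => /andP[a b].
  rewrite -e //; apply: hn; exact/leP.
case: (h2 eps he) => n1 hn; exists (maxn n0 n1) => n hn'.
have /leP := hn'; rewrite geq_max => /andP[a b].
rewrite -e //; apply: hn; exact/leP.
Qed.

Lemma Rnz_ev (w : nat -> R) (l : R) : Un_cv w l -> l <> R0 ->
  exists n0 : nat, forall n : nat, (n0 <= n)%N -> w n <> R0.
Proof.
move=> h hl.
have he : Rgt (Rdiv (Rabs l) (IZR (Zpos (xO xH)))) R0.
  apply: Rdiv_lt_0_compat; [exact: Rabs_pos_lt | exact: Rlt_0_2].
case: (h _ he) => n0 hn; exists n0 => n hn' e0.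
have := hn n (elimT leP hn'); rewrite /R_dist e0.
rewrite Rminus_0_l Rabs_Ropp => hh.
have : Rlt (Rabs l) (Rabs l).
  apply: (Rlt_trans _ _ _ hh); apply: Rlt_eps2_eps; exact: Rabs_pos_lt.
exact: Rlt_irrefl.
Qed.

Lemma ccv_ev_nz (u : nat -> CC) l : ccv u l -> l != 0 -> exists n0 : nat, forall n : nat, (n0 <= n)%N -> u n != 0.
Proof.
case: l => a b [h1 h2] hl.
have : a <> R0 \/ b <> R0.
  case: (Req_dec a R0) => ha; last by left.
  case: (Req_dec b R0) => hb; last by right.
  by move: hl; rewrite ha hb eqxx.
case=> [ha|hb].
  case: (Rnz_ev h1 ha) => n0 hn; exists n0 => n hn'.
  apply/eqP => e; apply: (hn n hn'); by rewrite e.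
case: (Rnz_ev h2 hb) => n0 hn; exists n0 => n hn'.
apply/eqP => e; apply: (hn n hn'); by rewrite e.
Qed.

Definition mcv p q (A : nat -> 'M[CC]_(p, q)) (B : 'M[CC]_(p, q)) : Prop :=
  forall i j, ccv (fun n => A n i j) (B i j).

Lemma mcv_add p q (A B : nat -> 'M[CC]_(p, q)) A0 B0 :
  mcv A A0 -> mcv B B0 -> mcv (fun n => A n + B n) (A0 + B0).
Proof.
move=> h1 h2 i j; rewrite mxE; apply: ccv_ext (ccv_add (h1 i j) (h2 i j)) => n.
by rewrite mxE.
Qed.

Lemma mcv_opp p q (A : nat -> 'M[CC]_(p, q)) A0 :
  mcv A A0 -> mcv (fun n => - A n) (- A0).
Proof.
move=> h1 i j; rewrite mxE; apply: ccv_ext (ccv_opp (h1 i j)) => n.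
by rewrite mxE.
Qed.

Lemma mcv_mul p q s (A : nat -> 'M[CC]_(p, q)) (B : nat -> 'M[CC]_(q, s)) A0 B0 :
  mcv A A0 -> mcv B B0 -> mcv (fun n => A n *m B n) (A0 *m B0).
Proof.
move=> h1 h2 i j; rewrite mxE.
have := @ccv_sum _ (index_enum 'I_q) xpredT (fun n k => A n i k * B n k j) _
  (fun k => ccv_mul (h1 i k) (h2 k j)).
by apply: ccv_ext => n; rewrite mxE.
Qed.

Lemma mcv_det p (A : nat -> 'M[CC]_p) A0 :
  mcv A A0 -> ccv (fun n => \det (A n)) (\det A0).
Proof.
move=> h; rewrite /determinant.
apply: (@ccv_sum _ _ xpredT
  (fun n (s : 'S_(p)) => (-1) ^+ s * \prod_i A n i (s i)) (fun s => (-1) ^+ s * \prod_i A0 i (s i))).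
move=> s; apply: ccv_mul; first exact: ccv_const.
exact: (@ccv_prod _ (index_enum 'I_p) xpredT (fun n i => A n i (s i))).
Qed.

Lemma mcv_adj p (A : nat -> 'M[CC]_p) A0 :
  mcv A A0 -> mcv (fun n => \adj (A n)) (\adj A0).
Proof.
move=> h i j; rewrite mxE /cofactor.
apply: (@ccv_ext (fun n => (-1) ^+ (j + i) * \det (row' j (col' i (A n))))).
  by move=> n; rewrite mxE.
apply: ccv_mul; first exact: ccv_const.
apply: mcv_det => k l; rewrite !mxE.
by apply: ccv_ext (h _ _) => n; rewrite !mxE.
Qed.

Section Tens.
Variable m : nat.
Local Notation N := (m * m)%nat.
Local Notation tensK := (nat -> nat -> nat -> CC).

Definition tcv (S : nat -> tensK) (T : tensK) : Prop :=
  forall a b c, (a < N)%nat -> (b < N)%nat -> (c < N)%nat -> ccv (fun n => S n a b c) (T a b c).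

Lemma mcv_sl S T al : tcv S T -> mcv (fun n => sl m (S n) al) (sl m T al).
Proof.
move=> h b c; rewrite mxE.
have := @ccv_sum _ (index_enum 'I_N) xpredT (fun n (a : 'I_N) => al a * S n a b c) _
  (fun a => ccv_mul (ccv_const (al a)) (h a b c (ltn_ord a) (ltn_ord b) (ltn_ord c))).
by apply: ccv_ext => n; rewrite mxE.
Qed.

Lemma Phi_cv S T : tcv S T -> ccv (fun n => Phi m (S n)) (Phi m T).
Proof.
move=> h.
have h1 := mcv_sl (al1 CC m) h; have h2 := mcv_adj (mcv_sl (al2 CC m) h).
have h3 := mcv_sl (al3 CC m) h.
exact: (mcv_det (mcv_add (mcv_mul (mcv_mul h1 h2) h3) (mcv_opp (mcv_mul (mcv_mul h3 h2) h1)))).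
Qed.

Lemma Psi_cv S T : tcv S T -> ccv (fun n => Psi m (S n)) (Psi m T).
Proof. by move=> h; apply: mcv_det; apply: mcv_sl. Qed.

Lemma sl_ext (T T' : tensK) (al : nat -> CC) : (forall a b c, (a < N)%nat -> (b < N)%nat -> (c < N)%nat -> T a b c = T' a b c) ->
  sl m T al = sl m T' al.
Proof.
move=> h; apply/matrixP=> b c; rewrite !mxE; apply: eq_bigr => a _.
by rewrite h.
Qed.

End Tens.

Lemma ccv_lim u l l' : ccv u l -> l = l' -> ccv u l'.
Proof. by move=> h <-. Qed.

Definition epsR (j : nat) : R := Rdiv R1 (pow (IZR (Zpos (xO xH))) j).
Definition eps (j : nat) : CC := Complex (epsR j) 0.

Lemma eps_cv : ccv eps 0.
Proof.
split; last exact: Un_cv_const.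
have := cv_pow_half R1; apply: Un_cv_ext => n; by [].
Qed.

Lemma eps_nz j : eps j != 0.
Proof.
apply/eqP => e; have : epsR j = R0 by move: e => /(congr1 (@complex.Re R)).
rewrite /epsR /Rdiv; apply: Rmult_integral_contrapositive; split.
  exact: R1_neq_R0.
apply: Rinv_neq_0_compat; apply: pow_nonzero; exact: (not_0_IZR _ _).
Qed.

Section Tens2.
Variable m : nat.
Hypothesis m2 : (1 < m)%nat.
Local Notation N := (m * m)%nat.

Lemma key_dec r (u v x : nat -> nat -> CC) :
  Psi m (Tdec r u v x) != 0 -> (2 * r < 3 * N)%nat -> Phi m (Tdec r u v x) = 0.
Proof.
move=> hP hr.
set d2 := dv m r u (al2 CC m).
pose z2 (k : nat) := oapp (fun k' : 'I_r => d2 0 k' == 0) false (insub k).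
pose u' j k a := u k a + (if z2 k && (a == 0)%nat then eps j else 0).
have hcv : tcv m (fun j => Tdec r (u' j) v x) (Tdec r u v x).
  move=> a b c _ _ _; rewrite /Tdec.
  apply: (@ccv_sum _ _ xpredT (fun j (k : 'I_r) => u' j k a * v k b * x k c) (fun k : 'I_r => u k a * v k b * x k c)) => k.
  apply: ccv_mul; last exact: ccv_const.
  apply: ccv_mul; last exact: ccv_const.
  have hp : ccv (fun n => if z2 k && (a == 0)%nat then eps n else 0) 0.
    by case: (z2 k && (a == 0)%nat); [exact: eps_cv | exact: ccv_const].
  apply: ccv_lim (ccv_add (ccv_const (u k a)) hp) _.
  by rewrite addr0.
have N0 : (0 < N)%nat by rewrite muln_gt0 (ltn_trans _ m2).
have [n0 hn0] := ccv_ev_nz (Psi_cv hcv) hP.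
have hz : forall j, (n0 <= j)%nat -> Phi m (Tdec r (u' j) v x) = 0.
  move=> j hj; apply: dec_zero => //; last exact: hn0.
  move=> k; rewrite /dv mxE.
  under eq_bigr => a _ do rewrite mulrDr.
  rewrite big_split /=.
  have -> : \sum_(a < N) al2 CC m a * (if z2 k && (nat_of_ord a == 0)%nat then eps j else 0)
      = if d2 0 k == 0 then eps j else 0.
    rewrite /z2 valK /=.
    case: ifP => h0 /=; last by rewrite big1 // => a _; rewrite mulr0.
    transitivity (\sum_(a < N) (if nat_of_ord a == 0%nat then al2 CC m a * eps j else 0)).
      by apply: eq_bigr => a _; case: ifP => _; rewrite ?mulr0.
    rewrite (@sum_pickN CC N 0 (fun a => al2 CC m a * eps j)) N0.
    by rewrite /al2 /Id div0n mod0n eqxx mul1r.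
  have hd : d2 0 k = \sum_(i < N) al2 CC m i * u k i by rewrite /d2 mxE.
  rewrite -hd; case: (d2 0 k =P 0) => [->|h]; first by rewrite add0r eps_nz.
  by rewrite addr0; apply/eqP.
have h0 := ccv_ev (ex_intro _ n0 (fun j hj => esym (hz j hj))) (ccv_const 0).
exact: (ccv_unique (Phi_cv hcv) h0).
Qed.
End Tens2.


Section Final.
Variable m : nat.
Hypothesis m2 : (1 < m)%nat.
Local Notation N := (m * m)%nat.

Definition toK (z : Defs.C) : CC := Complex (fst z) (snd z).

Lemma toK_add z w : toK (Cadd z w) = toK z + toK w.
Proof. by case: z w => [a b] [c d]. Qed.
Lemma toK_mul z w : toK (Cmul z w) = toK z * toK w.
Proof. by case: z w => [a b] [c d]. Qed.
Lemma toK_sum r f : toK (Csum r f) = \sum_(k < r) toK (f k).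
Proof.
elim: r => [|r IH]; first by rewrite big_ord0.
by rewrite big_ord_recr /= toK_add IH.
Qed.

Lemma divE a q : Nat.div a q = (a %/ q)%nat.
Proof.
case: q => [|q]; first by rewrite divn0.
apply: esym; apply: (Nat.div_unique _ _ _ (a %% q.+1)%nat).
  by apply/ltP; rewrite ltn_mod.
have := divn_eq a q.+1; lia.
Qed.
Lemma modE a q : Nat.modulo a q = (a %% q)%nat.
Proof.
case: q => [|q]; first by rewrite modn0.
apply: esym; apply: (Nat.mod_unique _ _ (a %/ q.+1)%nat).
  by apply/ltP; rewrite ltn_mod.
have := divn_eq a q.+1; lia.
Qed.
Lemma eqbE a b : Nat.eqb a b = (a == b).
Proof. by case: (Nat.eqb_spec a b) => [->|h]; [rewrite eqxx | apply/esym/eqP]. Qed.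

Lemma toK_M a b c : toK (matmul_tensor m a b c) = Mk CC m a b c.
Proof.
rewrite /matmul_tensor /Mk !eqbE !divE !modE.
by case: ifP.
Qed.

Lemma char0C k : (k.+1)%:R != 0 :> CC.
Proof.
rewrite -(rmorph_nat (real_complex R)).
apply/eqP => e; have : (k.+1)%:R = 0 :> R by move: e => /(congr1 (@complex.Re R)).
by move/eqP; rewrite pnatr_eq0.
Qed.

Lemma main_ssr r : border_rank_le (m * m) (matmul_tensor m) r -> (3 * N <= 2 * r)%nat.
Proof.
case=> T [hrk hcv]; rewrite leqNgt; apply/negP => hr.
pose S n a b c := toK (T n a b c).
have hS : tcv m S (Mk CC m).
  move=> a b c ha hb hc; have [h1 h2] := hcv a b c (elimT ltP ha) (elimT ltP hb) (elimT ltP hc).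
  by rewrite -toK_M; split.
have PsiM : Psi m (Mk CC m) != 0.
  rewrite /Psi /al2 slM; by move: (TmId_unit CC m); rewrite unitmxE unitfE.
have PhiM : Phi m (Mk CC m) != 0 by exact: (Mk_G_nz char0C m2).
have [n0 hn0] := ccv_ev_nz (Psi_cv hS) PsiM.
have hz : forall n, (n0 <= n)%nat -> 0 = Phi m (S n).
  move=> n hn; case: (hrk n) => u [v [x e]].
  pose u' k a := toK (u k a); pose v' k b := toK (v k b); pose x' k c := toK (x k c).
  have ext : forall al, sl m (S n) al = sl m (Tdec r u' v' x') al.
    move=> al; apply: sl_ext => a b c ha hb hc.
    rewrite /S e; try (by apply/ltP).
    rewrite toK_sum /Tdec; apply: eq_bigr => k _; by rewrite !toK_mul.
  have := hn0 n hn; rewrite /Psi /Phi !ext => hP.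
  exact: esym (key_dec m2 hP hr).
have h0 := ccv_ev (ex_intro _ n0 hz) (ccv_const 0).
move: PhiM; by rewrite -(ccv_unique h0 (Phi_cv hS)) eqxx.
Qed.
End Final.

Lemma final_work (m r : nat) :
  border_rank_le (Nat.mul m m) (matmul_tensor m) r ->
  (Nat.odd m = true -> le (Nat.mul 3 (Nat.mul m m)) (Nat.add (Nat.mul 2 r) 1)) /\
  (Nat.even m = true -> le (Nat.mul 3 (Nat.mul m m)) (Nat.add (Nat.mul 2 r) 4)).
Proof.
move=> H.
case: m H => [|[|m]] H.
- by split => //= _; lia.
- case: r H => [|r] H; last by split => _; lia.
  exfalso; case: H => T [hrk hcv].
  have [h1 _] := hcv 0%nat 0%nat 0%nat (Nat.lt_0_1) (Nat.lt_0_1) (Nat.lt_0_1).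
  have e : forall n, fst (T n 0%nat 0%nat 0%nat) = R0.
    move=> n; case: (hrk n) => u [v [x e]].
    by rewrite e //; apply: Nat.lt_0_1.
  have h0 : Un_cv (fun n => fst (T n 0%nat 0%nat 0%nat)) R0.
    by apply: Un_cv_ext (Un_cv_const R0) => n; rewrite e.
  have := UL_sequence _ _ _ h1 h0.
  rewrite /matmul_tensor /=; exact: R1_neq_R0.
- have hm : (1 < m.+2)%nat by [].
  have := main_ssr hm H => hl.
  have hl' : le (Nat.mul 3 (Nat.mul m.+2 m.+2)) (Nat.mul 2 r) by apply/leP.
  by split => _; lia.
Qed.
End Work.

Theorem theorem4p5 (m r : nat) :
  border_rank_le (m * m) (matmul_tensor m) r ->
  (Nat.odd m = true -> 3 * (m * m) <= 2 * r + 1)%nat /\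
  (Nat.even m = true -> 3 * (m * m) <= 2 * r + 4)%nat.
Proof.
exact (@Work.final_work m r).
Qed.
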